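(* Let $\mathcal P$ and $\mathrm{conv}(\mathcal P)$ be as in the context. Let $\eta$ be a real number with $0\le\eta\le\min\{L,(\overline C-\overline V)/V\}$ and let $\alpha,\beta,s_{\max}$ be integers such that (a) $L+1\le s_{\max}\le\min\{T-2,\lfloor(\overline C-\overline V)/V\rfloor\}$, (b) $1\le\alpha<\beta\le s_{\max}$, and (c) $\beta=\alpha+1$ or $s_{\max}\le L+\alpha$. Let $\mathcal S=[1,\alpha]_{\mathbb Z}\cup[\beta,s_{\max}]_{\mathbb Z}$. For any $t\in[s_{\max}+2,T]_{\mathbb Z}$, the inequality $$x_t\le(\overline V+\eta V)y_t+(\overline C-\overline V-\eta V)y_{t-1}-\sum_{s\in\mathcal S}(\overline C-\overline V-sV)(y_{t-s}-y_{t-s-1})\qquad(\ast)$$ is valid for $\mathrm{conv}(\mathcal P)$. For any $t\in[1,T-s_{\max}-1]_{\mathbb Z}$, the inequality $$x_t\le(\overline V+\eta V)y_t+(\overline C-\overline V-\eta V)y_{t+1}-\sum_{s\in\mathcal S}(\overline C-\overline V-sV)(y_{t+s}-y_{t+s+1})\qquad(\ast\ast)$$ is valid for $\mathrm{conv}(\mathcal P)$. Furthermore, $(\ast)$ and $(\ast\ast)$ are facet-defining for $\mathrm{conv}(\mathcal P)$ when $\eta\in\{0,(\overline C-\overline V)/V\}$ or $\eta=L\in\mathcal S$.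
   Context: For integers $a,b$, $[a,b]_{\mathbb Z}=\{a,a+1,\dots,b\}$ if $a\le b$ and $\emptyset$ otherwise. Fix a positive integer $T$, positive integers $L$ (minimum up time) and $\ell$ (minimum down time), and reals $\overline C,\underline C,V,\overline V$ with $\overline C>\underline C>0$, $V>0$, $\overline V+V\le\overline C$ and $\underline C<\overline V<\underline C+V$. $\mathcal P$ is the set of $(\mathbf x,\mathbf y)=((x_1,\dots,x_T),(y_1,\dots,y_T))\in\mathbb R_+^T\times\{0,1\}^T$ satisfying: (i) $-y_{t-1}+y_t-y_k\le 0$ for all $t\in[2,T]_{\mathbb Z}$, $k\in[t,\min\{T,t+L-1\}]_{\mathbb Z}$; (ii) $y_{t-1}-y_t+y_k\le 1$ for all $t\in[2,T]_{\mathbb Z}$, $k\in[t,\min\{T,t+\ell-1\}]_{\mathbb Z}$; (iii) $-x_t+\underline C y_t\le 0$ and $x_t-\overline C y_t\le 0$ for all $t\in[1,T]_{\mathbb Z}$; (iv) $x_t-x_{t-1}\le Vy_{t-1}+\overline V(1-y_{t-1})$ for all $t\in[2,T]_{\mathbb Z}$; (v) $x_{t-1}-x_t\le Vy_t+\overline V(1-y_t)$ for all $t\in[2,T]_{\mathbb Z}$. $\mathrm{conv}(\mathcal P)\subseteq\mathbb R^{2T}$ is its convex hull. A linear inequality is valid for $\mathrm{conv}(\mathcal P)$ if all its points satisfy it, and facet-defining if moreover the set of points of $\mathrm{conv}(\mathcal P)$ satisfying it with equality has dimension $\dim\mathrm{conv}(\mathcal P)-1$. *)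

(* Defs.v *)
From mathcomp Require Import all_boot all_order all_algebra.
From mathcomp Require Import reals.
Set Implicit Arguments.
Unset Strict Implicit.
Unset Printing Implicit Defensive.
Import Order.TTheory GRing.Theory Num.Theory.
Local Open Scope ring_scope.

(* Points of R^{2T} are row vectors z : 'rV[R]_(T + T); coordinate k (0-based)
   of z is [ent z k] (0 if k is out of range, never used). *)
Definition ent (R : realType) (n : nat) (z : 'rV[R]_n) (k : nat) : R :=
  odflt 0 (omap (fun i : 'I_n => z 0 i) (insub k)).

(* x_t = coordinate t-1,  y_t = coordinate T + t - 1  (t in [1,T]). *)
Definition xc (R : realType) (T : nat) (z : 'rV[R]_(T + T)) (t : nat) : R :=
  ent z t.-1.
Definition yc (R : realType) (T : nat) (z : 'rV[R]_(T + T)) (t : nat) : R :=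
  ent z (T + t.-1).
Arguments xc {R} T z t.
Arguments yc {R} T z t.

Definition inP (R : realType) (T L ell : nat) (Cbar Cund V Vbar : R)
  (z : 'rV[R]_(T + T)) : Prop :=
  (forall t, (1 <= t <= T)%N -> 0 <= xc T z t) /\
  (forall t, (1 <= t <= T)%N -> yc T z t = 0 \/ yc T z t = 1) /\
  (forall t k, (2 <= t <= T)%N -> (t <= k <= minn T (t + L - 1))%N ->
     - yc T z t.-1 + yc T z t - yc T z k <= 0) /\
  (forall t k, (2 <= t <= T)%N -> (t <= k <= minn T (t + ell - 1))%N ->
     yc T z t.-1 - yc T z t + yc T z k <= 1) /\
  (forall t, (1 <= t <= T)%N ->
     - xc T z t + Cund * yc T z t <= 0 /\ xc T z t - Cbar * yc T z t <= 0) /\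
  (forall t, (2 <= t <= T)%N ->
     xc T z t - xc T z t.-1 <= V * yc T z t.-1 + Vbar * (1 - yc T z t.-1)) /\
  (forall t, (2 <= t <= T)%N ->
     xc T z t.-1 - xc T z t <= V * yc T z t + Vbar * (1 - yc T z t)).

Arguments inP {R} T L ell Cbar Cund V Vbar z.

Definition conv (R : realType) (n : nat) (A : 'rV[R]_n -> Prop) (z : 'rV[R]_n)
  : Prop :=
  exists (m : nat) (p : 'I_m -> 'rV[R]_n) (w : 'I_m -> R),
    (forall i, A (p i)) /\ (forall i, 0 <= w i) /\ \sum_(i < m) w i = 1 /\
    z = \sum_(i < m) w i *: p i.

(* Affine dimension of a set of points (empty set has dimension -1):
   the maximal rank of the difference matrix of finitely many points of A. *)
Definition diffmx (R : realType) (n m : nat) (p : 'I_m.+1 -> 'rV[R]_n)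
  : 'M[R]_(m, n) := \matrix_(i < m) (p (lift ord0 i) - p ord0).

Definition has_affdim (R : realType) (n : nat) (A : 'rV[R]_n -> Prop) (d : int)
  : Prop :=
  ((forall z, ~ A z) /\ d = -1) \/
  (exists k : nat, d = k%:Z /\
     (exists (m : nat) (p : 'I_m.+1 -> 'rV[R]_n),
         (forall i, A (p i)) /\ \rank (diffmx p) = k) /\
     (forall (m : nat) (p : 'I_m.+1 -> 'rV[R]_n),
         (forall i, A (p i)) -> (\rank (diffmx p) <= k)%N)).

Definition valid_for (R : realType) (n : nat) (A : 'rV[R]_n -> Prop)
  (lhs rhs : 'rV[R]_n -> R) : Prop :=
  forall z, A z -> lhs z <= rhs z.

Definition facet_for (R : realType) (n : nat) (A : 'rV[R]_n -> Prop)
  (lhs rhs : 'rV[R]_n -> R) : Prop :=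
  valid_for A lhs rhs /\
  exists d : int, has_affdim A d /\
    has_affdim (fun z => A z /\ lhs z = rhs z) (d - 1).

Definition inS (alpha beta smax s : nat) : bool :=
  ((1 <= s <= alpha) || (beta <= s <= smax))%N.

(* Main.v *)
Require Import Defs.
From mathcomp Require Import all_boot all_order all_algebra.
From mathcomp Require Import reals.
From mathcomp Require Import zify ring lra.
Set Implicit Arguments.
Unset Strict Implicit.
Unset Printing Implicit Defensive.
Import Order.TTheory GRing.Theory Num.Theory.
Local Open Scope ring_scope.


Definition mkpt (R : realType) (T : nat) (X Y : nat -> R) : 'rV[R]_(T + T) :=
  row_mx (\row_(i < T) X i.+1) (\row_(i < T) Y i.+1).
Arguments mkpt {R} T X Y.

Lemma xc_mkpt (R : realType) (T : nat) (X Y : nat -> R) j : (1 <= j <= T)%N -> xc T (mkpt T X Y) j = X j.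
Proof.
move=> hj; rewrite /xc /ent.
have hk : (j.-1 < T + T)%N by lia.
rewrite insubT /=.
have hk2 : (j.-1 < T)%N by lia.
have -> : Sub j.-1 hk = lshift T (Ordinal hk2) by apply: val_inj.
rewrite /mkpt row_mxEl mxE /=; congr X; lia.
Qed.

Lemma yc_mkpt (R : realType) (T : nat) (X Y : nat -> R) j : (1 <= j <= T)%N -> yc T (mkpt T X Y) j = Y j.
Proof.
move=> hj; rewrite /yc /ent.
have hk : (T + j.-1 < T + T)%N by lia.
rewrite insubT /=.
have hk2 : (j.-1 < T)%N by lia.
have -> : Sub (T + j.-1) hk = rshift T (Ordinal hk2) by apply: val_inj.
rewrite /mkpt row_mxEr mxE /=; congr Y; lia.
Qed.

Lemma mkpt_ext (R : realType) (T : nat) (X1 Y1 X2 Y2 : nat -> R) :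
  (forall j, (1 <= j <= T)%N -> X1 j = X2 j) ->
  (forall j, (1 <= j <= T)%N -> Y1 j = Y2 j) -> mkpt T X1 Y1 = mkpt T X2 Y2.
Proof.
move=> hX hY; rewrite /mkpt; congr row_mx; apply/rowP => i; rewrite !mxE;
 [apply: hX | apply: hY]; have := ltn_ord i; lia.
Qed.

Lemma mkpt_xy (R : realType) (T : nat) (z : 'rV[R]_(T + T)) : z = mkpt T (xc T z) (yc T z).
Proof.
apply/rowP => c; rewrite /mkpt -(splitK c); case: (split c) => i /=.
- rewrite row_mxEl mxE /xc /ent /=.
  have hk : (i < T + T)%N by have := ltn_ord i; lia.
  rewrite insubT /=; congr (z 0 _); apply: val_inj => /=; lia.
- rewrite row_mxEr mxE /yc /ent /=.
  have hk : (T + i < T + T)%N by have := ltn_ord i; lia.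
  rewrite insubT /=; congr (z 0 _); apply: val_inj => /=; lia.
Qed.

Lemma mkptD (R : realType) (T : nat) (X1 Y1 X2 Y2 : nat -> R) :
  mkpt T X1 Y1 + mkpt T X2 Y2 = mkpt T (fun j => X1 j + X2 j) (fun j => Y1 j + Y2 j).
Proof. by rewrite /mkpt add_row_mx; congr row_mx; apply/rowP => i; rewrite !mxE. Qed.

Lemma mkptN (R : realType) (T : nat) (X1 Y1 : nat -> R) :
  - mkpt T X1 Y1 = mkpt T (fun j => - X1 j) (fun j => - Y1 j).
Proof. by rewrite /mkpt opp_row_mx; congr row_mx; apply/rowP => i; rewrite !mxE. Qed.

Lemma mkptB (R : realType) (T : nat) (X1 Y1 X2 Y2 : nat -> R) :
  mkpt T X1 Y1 - mkpt T X2 Y2 = mkpt T (fun j => X1 j - X2 j) (fun j => Y1 j - Y2 j).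
Proof. by rewrite mkptN mkptD. Qed.

Lemma mkptZ (R : realType) (T : nat) (a : R) (X1 Y1 : nat -> R) :
  a *: mkpt T X1 Y1 = mkpt T (fun j => a * X1 j) (fun j => a * Y1 j).
Proof. by rewrite /mkpt scale_row_mx; congr row_mx; apply/rowP => i; rewrite !mxE. Qed.

Lemma ent_lin (R : realType) n a (u v : 'rV[R]_n) k : ent (a *: u + v) k = a * ent u k + ent v k.
Proof.
rewrite /ent; case: insubP => [i _ _|_] /=; first by rewrite !mxE.
by rewrite mulr0 addr0.
Qed.

Lemma ent0 (R : realType) n k : ent (0 : 'rV[R]_n) k = 0.
Proof. by rewrite /ent; case: insubP => [i _ _|_] /=; rewrite ?mxE. Qed.

Lemma lin_sum (R : realType) n (f : 'rV[R]_n -> R) :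
  (forall a u v, f (a *: u + v) = a * f u + f v) ->
  forall m (w : 'I_m -> R) (p : 'I_m -> 'rV[R]_n),
  f (\sum_(i < m) w i *: p i) = \sum_(i < m) w i * f (p i).
Proof.
move=> hf.
have f0 : f 0 = 0.
  have := hf 1 0 0; rewrite scale1r addr0 mul1r => h.
  by apply: (@addrI _ (f 0)); rewrite addr0 -h.
elim=> [|m IH] w p; first by rewrite !big_ord0.
rewrite !big_ord_recr /= addrC hf IH addrC; done.
Qed.


Lemma core (R : realType) (n L : nat) (Cb Vb V eta : R) (S : pred nat) (X Y : nat -> R) :
 (forall k, (k <= n.+1)%N -> Y k = 0 \/ Y k = 1) ->
 (forall k, (k <= n.+1)%N -> X k <= Cb * Y k) ->
 (forall k, (k <= n)%N -> X k <= X k.+1 + V * Y k.+1 + Vb * (1 - Y k.+1)) ->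
 (forall k a, (k < a <= n)%N -> Y k = 0 -> (forall j, (k < j <= a)%N -> Y j = 1) ->
     Y a.+1 = 0 -> (k + L <= a)%N) ->
 (forall s, S s -> (1 <= s <= n)%N) ->
 (forall b a, (1 <= b)%N -> (b + L <= a)%N -> S a -> S b) ->
 (L <= n)%N ->
 0 < V -> Vb + n%:R * V <= Cb -> 0 <= eta -> eta <= L%:R ->
 X 0 <= (Vb + eta * V) * Y 0 + (Cb - Vb - eta * V) * Y 1
   - \sum_(0 <= s < n.+1 | S s) (Cb - Vb - s%:R * V) * (Y s - Y s.+1).
Proof.
move=> hY hXC hramp hrun hSr hS hLn V0 hc eta0 etaL.
set c := fun s : nat => Cb - Vb - s%:R * V.
set H := fun k => \sum_(k <= s < n.+1 | S s) c s * (Y s - Y s.+1).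
have cdec : forall a b, (a <= b)%N -> c b <= c a.
  move=> a b ab; rewrite /c; have : a%:R <= b%:R :> R by rewrite ler_nat.
  nra.
have cpos : forall a, (a <= n)%N -> 0 <= c a.
  move=> a an; apply: le_trans (cdec _ _ an); rewrite /c; lra.
have Hn : H n.+1 = 0 by rewrite /H big_geq.
have Hstep : forall k, (k <= n)%N ->
    H k = (if S k then c k * (Y k - Y k.+1) else 0) + H k.+1.
  move=> k kn; rewrite /H big_ltn_cond //=; case: (S k) => //; by rewrite add0r.
have claim : forall d k, (k + d = n.+1)%N -> (1 <= k)%N ->
   (Y k = 0 -> H k <= 0) /\
   (Y k = 1 -> H k <= 0 \/ exists a, [/\ (k <= a <= n)%N, S a,
       (forall j, (k <= j <= a)%N -> Y j = 1), Y a.+1 = 0 & H k <= c a]).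
  elim=> [|d IH] k hkd hk1.
    rewrite addn0 in hkd; subst k; rewrite Hn; split=> _ //; by left.
  have kn : (k <= n)%N by lia.
  have [IHz IHo] := IH k.+1 ltac:(lia) ltac:(lia).
  rewrite Hstep //.
  split=> hYk.
  - case: (hY k.+1 ltac:(lia)) => hYk1.
    + rewrite hYk hYk1 subrr mulr0 if_same add0r; exact: IHz.
    + case: (IHo hYk1) => [hle|[a [ha hSa hrunY hYa1 hHa]]].
      * rewrite hYk hYk1; case: (S k); last by rewrite add0r.
        have := cpos k kn; nra.
      * have hkL : (k + L <= a)%N.
          apply: (hrun k a); [lia|done|move=> j hj; apply: hrunY; lia|done].
        have hSk : S k by apply: (hS k a) => //.
        rewrite hSk hYk hYk1.
        have := cdec k a ltac:(lia); lra.
  - case: (hY k.+1 ltac:(lia)) => hYk1.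
    + case hSk: (S k).
      * right; exists k; split => //; first by lia.
        -- move=> j hj; have -> : j = k by lia. done.
        -- rewrite hYk hYk1 subr0 mulr1; have := IHz hYk1; lra.
      * left; rewrite add0r; exact: IHz.
    + rewrite hYk hYk1 subrr mulr0 if_same add0r.
      case: (IHo hYk1) => [hle|[a [ha hSa hrunY hYa1 hHa]]]; first by left.
      right; exists a; split => //; first by lia.
      move=> j hj; case: (ltngtP j k) => [|jk|->] //; first by lia.
      apply: hrunY; lia.
have [Z1 O1] := claim n 1%N ltac:(lia) (leqnn 1).
have sumE : \sum_(0 <= s < n.+1 | S s) c s * (Y s - Y s.+1) = H 1%N.
  rewrite /H big_ltn_cond //.
  have : ~~ S 0%N by apply/negP => /hSr; lia.
  by move/negbTE => ->.
rewrite -/c sumE.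
have etaV : eta * V <= Cb - Vb.
  have : eta * V <= n%:R * V.
    apply: ler_wpM2r; first by lra.
    apply: (le_trans etaL); rewrite ler_nat //.
  lra.
have ramp : forall a, (a <= n)%N -> (forall j, (1 <= j <= a)%N -> Y j = 1) ->
    Y a.+1 = 0 -> X 0 <= Vb + a%:R * V.
  move=> a an hrunY hYa.
  have : forall i, (i <= a)%N -> X (a - i)%N <= Vb + i%:R * V.
    elim=> [|i IH] hi.
      rewrite subn0 mul0r addr0.
      have := hramp a an; have := hXC a.+1 ltac:(lia); rewrite hYa; lra.
    have := IH ltac:(lia).
    have := hramp (a - i.+1)%N ltac:(lia).
    have -> : (a - i.+1).+1 = (a - i)%N by lia.
    rewrite (hrunY (a - i)%N ltac:(lia)) -addn1 natrD; lra.
  by move/(_ a (leqnn a)); rewrite subnn.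
case: (hY 0%N ltac:(lia)) => hY0.
- have hX0 : X 0%N <= 0 by have := hXC 0%N ltac:(lia); rewrite hY0 mulr0.
  rewrite hY0 mulr0 add0r.
  case: (hY 1%N ltac:(lia)) => hY1.
  + rewrite hY1 mulr0 add0r; have := Z1 hY1; lra.
  + rewrite hY1 mulr1.
    case: (O1 hY1) => [hle|[a [ha hSa hrunY hYa1 hHa]]]; first by lra.
    have haL : (L <= a)%N.
      have := hrun 0%N a ltac:(lia) hY0 ltac:(move=> j hj; apply: hrunY; lia) hYa1.
      lia.
    have : eta * V <= a%:R * V.
      apply: ler_wpM2r; first by lra.
      apply: (le_trans etaL); rewrite ler_nat //.
    rewrite /c in hHa; lra.
- case: (hY 1%N ltac:(lia)) => hY1.
  + have := hramp 0%N ltac:(lia); have := hXC 1%N ltac:(lia).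
    rewrite hY0 hY1 !mulr1 !mulr0 => h1 h2.
    have := Z1 hY1; have : 0 <= eta * V by apply: mulr_ge0 => //; lra.
    lra.
  + rewrite hY0 hY1 !mulr1.
    case: (O1 hY1) => [hle|[a [ha hSa hrunY hYa1 hHa]]].
    * have := hXC 0%N ltac:(lia); rewrite hY0 mulr1; lra.
    * have := ramp a ltac:(lia) ltac:(move=> j hj; apply: hrunY; lia) hYa1.
      rewrite /c in hHa; lra.
Qed.


Definition star_def (R : realType) (T : nat) (Cbar Vbar V eta : R) (alpha beta smax : nat)
  (t : nat) (z : 'rV[R]_(T + T)) : R :=
    (Vbar + eta * V) * yc T z t + (Cbar - Vbar - eta * V) * yc T z (t - 1)
    - \sum_(0 <= s < smax.+1 | inS alpha beta smax s)
        (Cbar - Vbar - s%:R * V) * (yc T z (t - s) - yc T z (t - s - 1)).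

Definition star2_def (R : realType) (T : nat) (Cbar Vbar V eta : R) (alpha beta smax : nat)
  (t : nat) (z : 'rV[R]_(T + T)) : R :=
    (Vbar + eta * V) * yc T z t + (Cbar - Vbar - eta * V) * yc T z (t + 1)
    - \sum_(0 <= s < smax.+1 | inS alpha beta smax s)
        (Cbar - Vbar - s%:R * V) * (yc T z (t + s) - yc T z (t + s + 1)).

Lemma xc_lin (R : realType) T t a (u v : 'rV[R]_(T + T)) :
  xc T (a *: u + v) t = a * xc T u t + xc T v t.
Proof. exact: ent_lin. Qed.

Lemma yc_lin (R : realType) T t a (u v : 'rV[R]_(T + T)) :
  yc T (a *: u + v) t = a * yc T u t + yc T v t.
Proof. exact: ent_lin. Qed.

Lemma lin_aux (R : realType) (a c u1 u2 v1 v2 : R) :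
  c * ((a * u1 + v1) - (a * u2 + v2)) = a * (c * (u1 - u2)) + c * (v1 - v2).
Proof. ring. Qed.

Lemma star_lin (R : realType) T Cb Vb V eta al be sm t a (u v : 'rV[R]_(T + T)) :
  star_def Cb Vb V eta al be sm t (a *: u + v) =
  a * star_def Cb Vb V eta al be sm t u + star_def Cb Vb V eta al be sm t v.
Proof.
rewrite /star_def !yc_lin.
under eq_bigr => s _ do rewrite !yc_lin lin_aux.
rewrite big_split /= -mulr_sumr; ring.
Qed.

Lemma star2_lin (R : realType) T Cb Vb V eta al be sm t a (u v : 'rV[R]_(T + T)) :
  star2_def Cb Vb V eta al be sm t (a *: u + v) =
  a * star2_def Cb Vb V eta al be sm t u + star2_def Cb Vb V eta al be sm t v.
Proof.
rewrite /star2_def !yc_lin.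
under eq_bigr => s _ do rewrite !yc_lin lin_aux.
rewrite big_split /= -mulr_sumr; ring.
Qed.

Lemma conv_valid (R : realType) n (P : 'rV[R]_n -> Prop) (f g : 'rV[R]_n -> R) :
  (forall a u v, f (a *: u + v) = a * f u + f v) ->
  (forall a u v, g (a *: u + v) = a * g u + g v) ->
  (forall z, P z -> f z <= g z) -> valid_for (conv P) f g.
Proof.
move=> hf hg hP z [m [p [w [hp [hw [_ ->]]]]]].
rewrite (lin_sum hf) (lin_sum hg); apply: ler_sum => i _.
by apply: ler_wpM2l; [exact: hw | exact: hP].
Qed.

Lemma inS_struct (L alpha beta smax : nat) :
  (1 <= alpha)%N -> (alpha < beta)%N -> (beta <= smax)%N ->
  (beta = alpha + 1 \/ (smax <= L + alpha)%N)%N ->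
  forall b a, (1 <= b)%N -> (b + L <= a)%N -> inS alpha beta smax a -> inS alpha beta smax b.
Proof.
rewrite /inS => h1 h2 h3 h4 b a hb hba.
case/orP => /andP [ha1 ha2]; apply/orP.
- left; apply/andP; split; lia.
- case: h4 => h4.
  + case: (leqP b alpha) => hb2; [left|right]; apply/andP; split; lia.
  + left; apply/andP; split; lia.
Qed.

Lemma inS_range (alpha beta smax s : nat) :
  (alpha < beta)%N -> (beta <= smax)%N -> inS alpha beta smax s -> (1 <= s <= smax)%N.
Proof. rewrite /inS => h1 h2; case/orP => /andP [? ?]; apply/andP; split; lia. Qed.

Lemma valid_P (R : realType) (T L ell : nat) (Cbar Cund V Vbar eta : R)
  (alpha beta smax : nat) z :
  (1 <= alpha)%N -> (alpha < beta)%N -> (beta <= smax)%N ->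
  (beta = alpha + 1 \/ (smax <= L + alpha)%N)%N -> (L <= smax)%N ->
  0 < V -> Vbar + smax%:R * V <= Cbar -> 0 <= eta -> eta <= L%:R ->
  inP T L ell Cbar Cund V Vbar z ->
  (forall t, (smax + 2 <= t <= T)%N ->
     xc T z t <= star_def Cbar Vbar V eta alpha beta smax t z) /\
  (forall t, (1 <= t)%N -> (t + smax + 1 <= T)%N ->
     xc T z t <= star2_def Cbar Vbar V eta alpha beta smax t z).
Proof.
move=> ha hab hb hc hL V0 hC e0 eL [hx [hy [hi [hii [hiii [hiv hv]]]]]].
have hS := inS_struct ha hab hb hc.
split.
- move=> t ht.
  have h1 : forall k, (k <= smax.+1)%N -> yc T z (t - k) = 0 \/ yc T z (t - k) = 1.
    move=> k hk; apply: hy; lia.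
  have h2 : forall k, (k <= smax.+1)%N -> xc T z (t - k) <= Cbar * yc T z (t - k).
    move=> k hk; have := (hiii (t - k)%N ltac:(lia)).2; lra.
  have h3 : forall k, (k <= smax)%N -> xc T z (t - k) <= xc T z (t - k.+1) +
      V * yc T z (t - k.+1) + Vbar * (1 - yc T z (t - k.+1)).
    move=> k hk; have := hiv (t - k)%N ltac:(lia).
    have -> : (t - k).-1 = (t - k.+1)%N by lia.
    lra.
  have h4 : forall k a, (k < a <= smax)%N -> yc T z (t - k) = 0 ->
      (forall j, (k < j <= a)%N -> yc T z (t - j) = 1) -> yc T z (t - a.+1) = 0 ->
      (k + L <= a)%N.
    move=> k a hka hYk hrunY hYa.
    case: (leqP (k + L) a) => // hlt; exfalso.
    have := hi (t - a)%N (t - k)%N ltac:(lia) ltac:(lia).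
    have -> : (t - a).-1 = (t - a.+1)%N by lia.
    rewrite hYk hYa (hrunY a ltac:(lia)); lra.
  have key := @core R smax L Cbar Vbar V eta (inS alpha beta smax)
    (fun k => xc T z (t - k)) (fun k => yc T z (t - k)) h1 h2 h3 h4
    (fun s hs => inS_range hab hb hs) hS hL V0 hC e0 eL.
  rewrite /= subn0 in key; apply: (le_trans key).
  rewrite /star_def; apply: lerD => //; rewrite lerN2 le_eqVlt; apply/orP; left.
  apply/eqP; apply: eq_bigr => s _; congr (_ * (_ - yc T z _)); lia.
- move=> t ht1 ht2.
  have h1 : forall k, (k <= smax.+1)%N -> yc T z (t + k) = 0 \/ yc T z (t + k) = 1.
    move=> k hk; apply: hy; lia.
  have h2 : forall k, (k <= smax.+1)%N -> xc T z (t + k) <= Cbar * yc T z (t + k).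
    move=> k hk; have := (hiii (t + k)%N ltac:(lia)).2; lra.
  have h3 : forall k, (k <= smax)%N -> xc T z (t + k) <= xc T z (t + k.+1) +
      V * yc T z (t + k.+1) + Vbar * (1 - yc T z (t + k.+1)).
    move=> k hk; have := hv (t + k.+1)%N ltac:(lia).
    have -> : (t + k.+1).-1 = (t + k)%N by lia.
    lra.
  have h4 : forall k a, (k < a <= smax)%N -> yc T z (t + k) = 0 ->
      (forall j, (k < j <= a)%N -> yc T z (t + j) = 1) -> yc T z (t + a.+1) = 0 ->
      (k + L <= a)%N.
    move=> k a hka hYk hrunY hYa.
    case: (leqP (k + L) a) => // hlt; exfalso.
    have := hi (t + k.+1)%N (t + a.+1)%N ltac:(lia) ltac:(lia).
    have -> : (t + k.+1).-1 = (t + k)%N by lia.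
    rewrite hYk hYa (hrunY k.+1 ltac:(lia)); lra.
  have key := @core R smax L Cbar Vbar V eta (inS alpha beta smax)
    (fun k => xc T z (t + k)) (fun k => yc T z (t + k)) h1 h2 h3 h4
    (fun s hs => inS_range hab hb hs) hS hL V0 hC e0 eL.
  rewrite /= addn0 in key; apply: (le_trans key).
  rewrite /star2_def; apply: lerD => //; rewrite lerN2 le_eqVlt; apply/orP; left.
  apply/eqP; apply: eq_bigr => s _; congr (_ * (_ - yc T z _)); lia.
Qed.

Definition ind1 (R : realType) (k : nat) : nat -> R := fun i => (i == k)%:R.

Definition exv (R : realType) (T j : nat) : 'rV[R]_(T + T) :=
  mkpt T (fun i => (i == j)%:R) (fun _ => 0).
Definition eyv (R : realType) (T k : nat) : 'rV[R]_(T + T) :=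
  mkpt T (fun _ => 0) (fun i => (i == k)%:R).

Lemma delta_l (R : realType) (T : nat) (i : 'I_T) :
  delta_mx 0 (lshift T i) = exv R T i.+1.
Proof.
apply/rowP => c; rewrite -(splitK c); case: (split c) => j /=;
rewrite mxE /exv /mkpt ?row_mxEl ?row_mxEr !mxE ?eq_lshift ?eq_rlshift ?eqSS //=.
Qed.

Lemma delta_r (R : realType) (T : nat) (i : 'I_T) :
  delta_mx 0 (rshift T i) = eyv R T i.+1.
Proof.
apply/rowP => c; rewrite -(splitK c); case: (split c) => j /=;
rewrite mxE /eyv /mkpt ?row_mxEl ?row_mxEr !mxE ?eq_rshift ?eq_lrshift ?eqSS //=.
Qed.

Lemma mkptX0_sum (R : realType) (T : nat) (X : nat -> R) :
  mkpt T X (fun _ => 0) = \sum_(j < T) X j.+1 *: exv R T j.+1.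
Proof.
apply/rowP => c; rewrite summxE -(splitK c); case: (split c) => i /=.
- rewrite /exv /mkpt row_mxEl mxE (bigD1 i) //= mxE row_mxEl mxE eqxx mulr1 big1 ?addr0 //.
  move=> j hj; rewrite mxE row_mxEl !mxE eqSS.
  have -> : (nat_of_ord i == nat_of_ord j) = false.
    by apply/negbTE; rewrite eq_sym; exact: hj.
  by rewrite mulr0.
- rewrite /mkpt row_mxEr mxE big1 // => j _; rewrite /exv /mkpt mxE row_mxEr !mxE mulr0 //.
Qed.

Lemma full_span (R : realType) (T m : nat) (B : 'M[R]_(m, T + T)) :
  (forall j, (1 <= j <= T)%N -> (exv R T j <= B)%MS) ->
  (forall k, (1 <= k <= T)%N -> exists X : nat -> R, (mkpt T X (ind1 R k) <= B)%MS) ->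
  (1%:M <= B)%MS.
Proof.
move=> hx hy; apply/row_subP => c; rewrite row1 -(splitK c); case: (split c) => i /=.
- rewrite delta_l; apply: hx; have := ltn_ord i; lia.
- have [X hX] := hy i.+1 ltac:(have := ltn_ord i; lia).
  rewrite delta_r.
  have -> : eyv R T i.+1 = mkpt T X (ind1 R i.+1) + (-1) *: mkpt T X (fun _ => 0).
    rewrite mkptZ mkptD; apply: mkpt_ext => j _; rewrite /ind1; ring.
  apply: addmx_sub => //; apply: scalemx_sub.
  rewrite mkptX0_sum; apply: summx_sub => j _; apply: scalemx_sub; apply: hx.
  have := ltn_ord j; lia.
Qed.

Lemma rank_full (R : realType) (T m : nat) (B : 'M[R]_(m, T + T)) :
  (forall j, (1 <= j <= T)%N -> (exv R T j <= B)%MS) ->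
  (forall k, (1 <= k <= T)%N -> exists X : nat -> R, (mkpt T X (ind1 R k) <= B)%MS) ->
  \rank B = (T + T)%N.
Proof.
move=> hx hy; apply/eqP; rewrite eqn_leq rank_leq_col /=.
by rewrite -{1}(mxrank1 R (T + T)) mxrankS // full_span.
Qed.

Lemma rank_face_lb (R : realType) (T m t0 : nat) (B : 'M[R]_(m, T + T)) :
  (1 <= t0 <= T)%N ->
  (forall j, (1 <= j <= T)%N -> j != t0 -> (exv R T j <= B)%MS) ->
  (forall k, (1 <= k <= T)%N -> exists X : nat -> R, (mkpt T X (ind1 R k) <= B)%MS) ->
  (T + T - 1 <= \rank B)%N.
Proof.
move=> ht hx hy.
have ht' : (t0.-1 < T)%N by lia.
set xt := lshift T (Ordinal ht').
have h1 : (1%:M <= (B + (delta_mx 0 xt : 'rV[R]_(T + T)))%MS)%MS.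
  apply: full_span.
  - move=> j hj; case: (eqVneq j t0) => [->|hjt].
    + have -> : exv R T t0 = delta_mx 0 xt by rewrite delta_l /=; congr exv; lia.
      exact: addsmxSr.
    + exact: submx_trans (hx j hj hjt) (addsmxSl _ _).
  - move=> k hk; have [X hX] := hy k hk; exists X; exact: submx_trans hX (addsmxSl _ _).
have h2 := mxrankS h1; rewrite mxrank1 in h2.
have h3 := (mxrank_adds_leqif B (delta_mx 0 xt : 'rV[R]_(T + T))).1.
rewrite mxrank_delta in h3.
lia.
Qed.

Lemma rank_face_ub (R : realType) (n m : nat) (D : 'M[R]_(m, n)) (f : 'rV[R]_n -> R) c :
  (forall a u v, f (a *: u + v) = a * f u + f v) ->
  f (delta_mx 0 c) != 0 -> (forall i, f (row i D) = 0) -> (\rank D <= n - 1)%N.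
Proof.
move=> hf hc hD.
have := rank_leq_col D; rewrite leq_eqVlt => /orP [/eqP hr|]; last by lia.
exfalso; move/negP: hc; apply.
have : ((delta_mx 0 c : 'rV[R]_n) <= D)%MS.
  have h1 : (1%:M <= D)%MS by rewrite sub1mx /row_full hr.
  apply: (submx_trans _ h1); exact: submx1.
case/submxP => w; rewrite /= => ->; rewrite mulmx_sum_row (lin_sum hf) big1 // => i _.
by rewrite hD mulr0.
Qed.

Definition ind (R : realType) (k1 k2 : nat) : nat -> R :=
  fun j => if (k1 <= j < k2)%N then 1 else 0.
Arguments ind {R} k1 k2 j.

Lemma interval_inP (R : realType) (T L ell : nat) (Cb Cu V Vb : R) (k1 k2 : nat) (X : nat -> R) :
 (k1 <= 1 \/ k1 + L <= k2 \/ T + 1 <= k2)%N ->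
 (forall j, (1 <= j <= T)%N -> ((k1 <= j < k2)%N -> Cu <= X j <= Cb) /\
                               (~~ (k1 <= j < k2)%N -> X j = 0)) ->
 (forall j, (2 <= j <= T)%N -> X j - X j.-1 <= V * ind k1 k2 j.-1 + Vb * (1 - ind k1 k2 j.-1)) ->
 (forall j, (2 <= j <= T)%N -> X j.-1 - X j <= V * ind k1 k2 j + Vb * (1 - ind k1 k2 j)) ->
 0 <= Cu ->
 inP T L ell Cb Cu V Vb (mkpt T X (ind k1 k2)).
Proof.
move=> hk hX hup hdn hCu.
have xE : forall j, (1 <= j <= T)%N -> xc T (mkpt T X (ind k1 k2)) j = X j.
  by move=> j hj; rewrite xc_mkpt.
have yE : forall j, (1 <= j <= T)%N -> yc T (mkpt T X (ind k1 k2)) j = ind k1 k2 j.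
  by move=> j hj; rewrite yc_mkpt.
split; [|split; [|split; [|split; [|split; [|split]]]]].
- move=> t ht; rewrite xE //; have [h1 h2] := hX t ht.
  case: (boolP (k1 <= t < k2)%N) => h.
  + have := h1 h; lra.
  + by rewrite h2.
- move=> t ht; rewrite yE // /ind; case: ifP => _; [right|left]; done.
- move=> t k ht hk'; rewrite !yE; try lia.
  rewrite /ind; case: (boolP (k1 <= t.-1 < k2)%N) => h1;
  case: (boolP (k1 <= t < k2)%N) => h2; case: (boolP (k1 <= k < k2)%N) => h3; try lra.
  exfalso; lia.
- move=> t k ht hk'; rewrite !yE; try lia.
  rewrite /ind; case: (boolP (k1 <= t.-1 < k2)%N) => h1;
  case: (boolP (k1 <= t < k2)%N) => h2; case: (boolP (k1 <= k < k2)%N) => h3; try lra.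
  exfalso; lia.
- move=> t ht; rewrite xE // yE //; have [h1 h2] := hX t ht.
  rewrite /ind; case: (boolP (k1 <= t < k2)%N) => h.
  + have := h1 h; lra.
  + rewrite h2 //; lra.
- move=> t ht; rewrite !xE ?yE; try lia; exact: hup.
- move=> t ht; rewrite !xE ?yE; try lia; exact: hdn.
Qed.

Lemma minE_cases (R : realType) (x y : R) :
  (Num.min x y = x /\ x <= y) \/ (Num.min x y = y /\ y <= x).
Proof.
case: (ltP x y) => h; [left|right]; split => //; lra.
Qed.

Ltac mincase := match goal with |- context [Order.min ?a ?b] =>
  case: (minE_cases a b) => [[-> ?]|[-> ?]] end.

Ltac ifs := repeat match goal with |- context [if ?c then _ else _] =>
  first [ let H := fresh "H" in (have H : c by lia); rewrite H /=; clear H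
        | let H := fresh "H" in (have H : c = false by apply/negbTE/negP; lia);
          rewrite H /=; clear H ] end.

Lemma const_inP (R : realType) (T L ell : nat) (Cb Cu V Vb c : R) (k1 k2 : nat) :
 (k1 <= 1 \/ k1 + L <= k2 \/ T + 1 <= k2)%N ->
 0 <= Cu -> Cu <= c -> c <= Vb -> c <= Cb -> 0 <= V ->
 inP T L ell Cb Cu V Vb (mkpt T (fun j => c * ind k1 k2 j) (ind k1 k2)).
Proof.
move=> hk h1 h2 h3 h4 h5; apply: interval_inP => //.
- move=> j hj; rewrite /ind; split => h; first by rewrite h; lra.
  by rewrite (negbTE h) mulr0.
- move=> j hj; rewrite /ind.
  case: (boolP (k1 <= j.-1 < k2)%N) => a; case: (boolP (k1 <= j < k2)%N) => b; lra.
- move=> j hj; rewrite /ind.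
  case: (boolP (k1 <= j.-1 < k2)%N) => a; case: (boolP (k1 <= j < k2)%N) => b; lra.
Qed.

Lemma ones_inP (R : realType) (T L ell : nat) (Cb Cu V Vb : R) (X : nat -> R) :
 0 <= Cu ->
 (forall j, (1 <= j <= T)%N -> Cu <= X j <= Cb) ->
 (forall j, (2 <= j <= T)%N -> X j - X j.-1 <= V /\ X j.-1 - X j <= V) ->
 inP T L ell Cb Cu V Vb (mkpt T X (ind 1 T.+1)).
Proof.
move=> h0 hX hr; apply: interval_inP => //.
- by left.
- move=> j hj; split => h; first exact: hX.
  exfalso; move/negP: h; apply; lia.
- move=> j hj; rewrite /ind ifT; last by lia.
  have := (hr j hj).1; lra.
- move=> j hj; rewrite /ind ifT; last by lia.
  have := (hr j hj).2; lra.
Qed.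

Lemma rampup_inP (R : realType) (T L ell : nat) (Cb Cu V Vb : R) (k : nat) :
 (1 <= k)%N -> 0 <= Cu -> Cu <= Vb -> Vb <= Cb -> 0 <= V ->
 inP T L ell Cb Cu V Vb
   (mkpt T (fun j => if (k <= j)%N then Num.min Cb (Vb + (j - k)%:R * V) else 0)
      (ind k T.+1)).
Proof.
move=> hk h0 h1 h2 h3; apply: interval_inP.
- right; right; lia.
- move=> j hj; split => h.
  + rewrite ifT; last by lia.
    have : 0 <= (j - k)%:R * V by apply: mulr_ge0.
    mincase; lra.
  + rewrite ifF //; apply/negP => h'; move/negP: h; apply; lia.
- move=> j hj; rewrite /ind.
  case: (leqP k j) => a; case: (leqP k j.-1) => b.
  + ifs.
    have -> : (j - k = (j.-1 - k).+1)%N by lia.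
    rewrite -addn1 natrD.
    mincase; mincase; nra.
  + ifs.
    have -> : (j - k = 0)%N by lia.
    rewrite mul0r addr0; mincase; lra.
  + exfalso; lia.
  + ifs; lra.
- move=> j hj; rewrite /ind.
  case: (leqP k j) => a; case: (leqP k j.-1) => b.
  + ifs.
    have -> : (j - k = (j.-1 - k).+1)%N by lia.
    rewrite -addn1 natrD.
    have : 0 <= (j.-1 - k)%:R * V by apply: mulr_ge0.
    mincase; mincase; nra.
  + ifs.
    have -> : (j - k = 0)%N by lia.
    rewrite mul0r addr0; mincase; lra.
  + exfalso; lia.
  + ifs; lra.
- done.
Qed.

Lemma rampdn_inP (R : realType) (T L ell : nat) (Cb Cu V Vb : R) (k : nat) :
 (k <= T)%N -> 0 <= Cu -> Cu <= Vb -> Vb <= Cb -> 0 <= V ->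
 inP T L ell Cb Cu V Vb
   (mkpt T (fun j => if (j <= k)%N then Num.min Cb (Vb + (k - j)%:R * V) else 0)
      (ind 1 k.+1)).
Proof.
move=> hk h0 h1 h2 h3; apply: interval_inP.
- by left.
- move=> j hj; split => h.
  + rewrite ifT; last by lia.
    have : 0 <= (k - j)%:R * V by apply: mulr_ge0.
    mincase; lra.
  + rewrite ifF //; apply/negP => h'; move/negP: h; apply; lia.
- move=> j hj; rewrite /ind.
  case: (leqP j k) => a; case: (leqP j.-1 k) => b.
  + ifs.
    have -> : (k - j.-1 = (k - j).+1)%N by lia.
    rewrite -addn1 natrD.
    have : 0 <= (k - j)%:R * V by apply: mulr_ge0.
    mincase; mincase; nra.
  + exfalso; lia.
  + ifs.
    have -> : (k - j.-1 = 0)%N by lia.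
    rewrite mul0r addr0; mincase; lra.
  + ifs; lra.
- move=> j hj; rewrite /ind.
  case: (leqP j k) => a; case: (leqP j.-1 k) => b.
  + ifs.
    have -> : (k - j.-1 = (k - j).+1)%N by lia.
    rewrite -addn1 natrD.
    mincase; mincase; nra.
  + exfalso; lia.
  + ifs.
    have -> : (k - j.-1 = 0)%N by lia.
    rewrite mul0r addr0; mincase; lra.
  + ifs; lra.
- done.
Qed.

Definition rv (R : realType) (T : nat) (z : 'rV[R]_(T + T)) : 'rV[R]_(T + T) :=
  mkpt T (fun j => xc T z (T.+1 - j)%N) (fun j => yc T z (T.+1 - j)%N).
Arguments rv {R T} z.

Lemma rv_mkpt (R : realType) (T : nat) (X Y : nat -> R) :
  rv (mkpt T X Y) = mkpt T (fun j => X (T.+1 - j)%N) (fun j => Y (T.+1 - j)%N).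
Proof.
apply: mkpt_ext => j hj; [rewrite xc_mkpt | rewrite yc_mkpt] => //; lia.
Qed.

Lemma rv_lin (R : realType) (T : nat) (a : R) (u v : 'rV[R]_(T + T)) :
  rv (a *: u + v) = a *: rv u + rv v.
Proof. by rewrite /rv mkptZ mkptD; apply: mkpt_ext => j _; rewrite ?xc_lin ?yc_lin. Qed.

Lemma lin_sumV (R : realType) n k (f : 'rV[R]_n -> 'rV[R]_k) :
  (forall a u v, f (a *: u + v) = a *: f u + f v) ->
  forall m (w : 'I_m -> R) (p : 'I_m -> 'rV[R]_n),
  f (\sum_(i < m) w i *: p i) = \sum_(i < m) w i *: f (p i).
Proof.
move=> hf.
have f0 : f 0 = 0.
  have := hf 1 0 0; rewrite scale1r addr0 scale1r => h.
  by apply: (@addrI _ (f 0)); rewrite addr0 -h.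
elim=> [|m IH] w p; first by rewrite !big_ord0.
rewrite !big_ord_recr /= addrC hf IH addrC; done.
Qed.

Lemma rv_sub (R : realType) (T m : nat) (p : 'I_m.+1 -> 'rV[R]_(T + T)) (v : 'rV[R]_(T + T)) :
  (v <= Defs.diffmx p)%MS -> (rv v <= Defs.diffmx (fun i => rv (p i)))%MS.
Proof.
case/submxP => w ->; rewrite mulmx_sum_row (lin_sumV (@rv_lin R T)).
apply: summx_sub => i _; apply: scalemx_sub.
have -> : rv (row i (Defs.diffmx p)) = row i (Defs.diffmx (fun i => rv (p i))).
  rewrite /Defs.diffmx !rowK.
  have E : forall u u2 : 'rV[R]_(T + T), rv (u - u2) = rv u - rv u2.
    move=> u u2; have -> : u - u2 = (-1) *: u2 + u by rewrite scaleN1r addrC.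
    by rewrite rv_lin scaleN1r addrC.
  by rewrite E.
exact: row_sub.
Qed.

Lemma rv_rv_x (R : realType) (T : nat) (z : 'rV[R]_(T + T)) t :
  (1 <= t <= T)%N -> xc T (rv z) t = xc T z (T.+1 - t)%N.
Proof. by move=> ht; rewrite /rv xc_mkpt. Qed.

Lemma rv_rv_y (R : realType) (T : nat) (z : 'rV[R]_(T + T)) t :
  (1 <= t <= T)%N -> yc T (rv z) t = yc T z (T.+1 - t)%N.
Proof. by move=> ht; rewrite /rv yc_mkpt. Qed.

Lemma star2_rv (R : realType) (T : nat) Cb Vb V eta al be sm t (z : 'rV[R]_(T + T)) :
  (1 <= t)%N -> (t + sm + 1 <= T)%N ->
  star2_def Cb Vb V eta al be sm t (rv z) = star_def Cb Vb V eta al be sm (T.+1 - t)%N z.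
Proof.
move=> h1 h2; rewrite /star2_def /star_def !rv_rv_y; try lia.
have -> : (T.+1 - (t + 1) = T.+1 - t - 1)%N by lia.
congr (_ - _); rewrite big_nat_cond [RHS]big_nat_cond; apply: eq_bigr => s.
case/andP => /andP [_ hs] _; rewrite !rv_rv_y; try lia.
congr (_ * (yc T z _ - yc T z _)); lia.
Qed.

Lemma star_mkpt (R : realType) (T : nat) Cb Vb V eta al be sm t (X Y : nat -> R) :
  (sm + 2 <= t <= T)%N ->
  star_def Cb Vb V eta al be sm t (mkpt T X Y) =
    (Vb + eta * V) * Y t + (Cb - Vb - eta * V) * Y (t - 1)%N
    - \sum_(0 <= s < sm.+1 | inS al be sm s) (Cb - Vb - s%:R * V) * (Y (t - s)%N - Y (t - s - 1)%N).
Proof.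
move=> ht; rewrite /star_def !yc_mkpt; try lia.
congr (_ - _); rewrite big_nat_cond [RHS]big_nat_cond; apply: eq_bigr => s.
case/andP => /andP [_ hs] _; rewrite !yc_mkpt //; lia.
Qed.

Lemma sum_pick (R : realType) n (P : pred nat) (F : nat -> R) a :
  \sum_(0 <= s < n | P s) F s * (s == a)%:R = if (a < n)%N && P a then F a else 0.
Proof.
rewrite big_mkcond /=; elim: n => [|n IH]; first by rewrite big_geq.
rewrite big_nat_recr //= IH.
case: (eqVneq n a) => [->|hna].
- rewrite ltnn /= mulr1 ltnSn add0r; by case: (P a).
- have -> : (a < n.+1)%N = (a < n)%N by rewrite ltnS leq_eqVlt eq_sym (negbTE hna).
  by rewrite mulr0 if_same addr0.
Qed.

Lemma sum_ind (R : realType) (t k1 k2 sm : nat) (c : nat -> R) (P : pred nat) :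
  (sm + 2 <= t)%N -> (forall s, P s -> (1 <= s <= sm)%N) -> (k1 <= k2)%N ->
  \sum_(0 <= s < sm.+1 | P s) c s * (ind k1 k2 (t - s) - ind k1 k2 (t - s - 1)) =
  (if P (t - k1)%N then c (t - k1)%N else 0) - (if P (t - k2)%N then c (t - k2)%N else 0).
Proof.
move=> ht hP hk.
have -> : \sum_(0 <= s < sm.+1 | P s) c s * (ind k1 k2 (t - s) - ind k1 k2 (t - s - 1)) =
   \sum_(0 <= s < sm.+1 | P s) (c s * (s == (t - k1)%N)%:R - c s * (s == (t - k2)%N)%:R).
  apply: eq_bigr => s hs; have := hP s hs => hs'.
  rewrite -mulrBr; congr (_ * _).
  rewrite /ind.
  case: (boolP (k1 <= t - s < k2)%N) => a; case: (boolP (k1 <= t - s - 1 < k2)%N) => b;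
  case: (eqVneq s (t - k1)%N) => c1; case: (eqVneq s (t - k2)%N) => c2; rewrite /=;
  try lra; exfalso; lia.
rewrite big_split /= sumrN !sum_pick.
have E : forall a, (a < sm.+1)%N && P a = P a.
  move=> a; case h: (P a); rewrite ?andbF ?andbT //; have := hP a h; lia.
by rewrite !E.
Qed.


Definition Apt (R : realType) (T : nat) (Cb : R) : 'rV[R]_(T + T) :=
  mkpt T (fun _ => Cb) (ind 1 T.+1).
Definition Ajpt (R : realType) (T : nat) (Cb V : R) (j : nat) : 'rV[R]_(T + T) :=
  mkpt T (fun i => Cb - V * (i == j)%:R) (ind 1 T.+1).
Definition CIpt (R : realType) (T : nat) (c : R) (k1 k2 : nat) : 'rV[R]_(T + T) :=
  mkpt T (fun i => c * ind k1 k2 i) (ind k1 k2).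
Definition Rpt (R : realType) (T : nat) (Cb Vb V : R) (k : nat) : 'rV[R]_(T + T) :=
  mkpt T (fun j => if (k <= j)%N then Num.min Cb (Vb + (j - k)%:R * V) else 0) (ind k T.+1).
Arguments Apt {R} T Cb.
Arguments Ajpt {R} T Cb V j.
Arguments CIpt {R} T c k1 k2.
Arguments Rpt {R} T Cb Vb V k.

Lemma mem_diff (R : realType) n (b : 'rV[R]_n) (tl : seq 'rV[R]_n) q :
  q \in b :: tl ->
  (q - b <= Defs.diffmx (fun i : 'I_(size tl).+1 => nth b (b :: tl) i))%MS.
Proof.
move=> hq.
have hi : (index q (b :: tl) < (size tl).+1)%N by rewrite -[X in (_ < X)%N]/(size (b :: tl)) index_mem.
have E : nth b (b :: tl) (index q (b :: tl)) = q by rewrite nth_index.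
case hidx : (index q (b :: tl)) => [|i].
- by rewrite hidx /= in E; rewrite -E subrr sub0mx.
- have hi' : (i < size tl)%N by rewrite hidx in hi.
  set o := Ordinal hi'.
  have -> : q - b = row o (Defs.diffmx (fun i : 'I_(size tl).+1 => nth b (b :: tl) i)).
    rewrite /Defs.diffmx rowK /= -E hidx /=; done.
  exact: row_sub.
Qed.

Lemma rv_CI (R : realType) T (c : R) k1 k2 :
  (1 <= k1 <= k2)%N -> (k2 <= T.+1)%N ->
  rv (CIpt T c k1 k2) = CIpt T c (T.+2 - k2) (T.+2 - k1).
Proof.
move=> h1 h2; rewrite /CIpt rv_mkpt; apply: mkpt_ext => j hj; rewrite /ind; ifs;
  case: (boolP (k1 <= T.+1 - j < k2)%N) => a; ifs => //.
Qed.

Lemma rv_A (R : realType) T (Cb : R) : rv (Apt T Cb) = Apt T Cb.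
Proof. rewrite /Apt rv_mkpt; apply: mkpt_ext => j hj; rewrite /ind; ifs => //. Qed.

Lemma rv_Aj (R : realType) T (Cb V : R) j :
  (1 <= j <= T)%N -> rv (Ajpt T Cb V j) = Ajpt T Cb V (T.+1 - j).
Proof.
move=> hj; rewrite /Ajpt rv_mkpt; apply: mkpt_ext => i hi; rewrite /ind; ifs => //.
case: (eqVneq i (T.+1 - j)%N) => [->|h].
- have -> : (T.+1 - (T.+1 - j) == j)%N by apply/eqP; lia.
  done.
- have -> : (T.+1 - i == j)%N = false by apply/negbTE/negP => /eqP; lia.
  done.
Qed.

Definition Rdpt (R : realType) (T : nat) (Cb Vb V : R) (k : nat) : 'rV[R]_(T + T) :=
  mkpt T (fun j => if (j <= k)%N then Num.min Cb (Vb + (k - j)%:R * V) else 0) (ind 1 k.+1).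
Arguments Rdpt {R} T Cb Vb V k.

Lemma rv_R (R : realType) T (Cb Vb V : R) k :
  (1 <= k <= T.+1)%N -> rv (Rpt T Cb Vb V k) = Rdpt T Cb Vb V (T.+1 - k).
Proof.
move=> hk; rewrite /Rpt /Rdpt rv_mkpt; apply: mkpt_ext => i hi.
- case: (leqP k (T.+1 - i)) => a; ifs => //.
  have -> : (T.+1 - i - k = T.+1 - k - i)%N by lia.
  done.
- rewrite /ind; case: (leqP k (T.+1 - i)) => a; ifs => //.
Qed.

Lemma tight_interval (R : realType) T Cb Vb V eta al be sm t (X : nat -> R) k1 k2 :
  (sm + 2 <= t <= T)%N -> (al < be)%N -> (be <= sm)%N -> (k1 <= k2)%N ->
  star_def Cb Vb V eta al be sm t (mkpt T X (ind k1 k2)) =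
  (Vb + eta * V) * ind k1 k2 t + (Cb - Vb - eta * V) * ind k1 k2 (t - 1)%N
  - ((if inS al be sm (t - k1)%N then Cb - Vb - (t - k1)%:R * V else 0)
     - (if inS al be sm (t - k2)%N then Cb - Vb - (t - k2)%:R * V else 0)).
Proof.
move=> ht h1 h2 hk; rewrite star_mkpt //.
congr (_ - _).
rewrite (sum_ind (fun s => Cb - Vb - s%:R * V)) //; first by lia.
by move=> s hs; apply: (inS_range h1 h2 hs).
Qed.

Lemma gA (R : realType) (T L ell : nat) (Cb Cu V Vb eta : R) (al be sm t : nat) :
  0 < Cu -> Cu < Vb -> 0 < V -> Vb + V <= Cb -> Vb + sm%:R * V <= Cb ->
  (L + 1 <= sm)%N -> (sm + 2 <= t <= T)%N -> (1 <= al)%N -> (al < be)%N -> (be <= sm)%N ->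
  let A := Apt T Cb in let S := inS al be sm in
  inP T L ell Cb Cu V Vb A /\ inP T L ell Cb Cu V Vb (rv A) /\
          xc T A t = star_def Cb Vb V eta al be sm t A.
Proof.
move=> hCu hCuVb hV hVbC hsmC hLs ht hal hab hbs.
move=> A S.
have hSr : forall s, S s -> (1 <= s <= sm)%N by move=> s; apply: inS_range.
have hA : inP T L ell Cb Cu V Vb A.
  apply: ones_inP; [lra| move=> j hj; lra | move=> j hj; split; lra].
split => //; rewrite rv_A; split => //.
rewrite /A /Apt xc_mkpt; last by lia.
rewrite tight_interval //; try lia.
rewrite /ind /inS; ifs; ring.
Qed.

Lemma gAj (R : realType) (T L ell : nat) (Cb Cu V Vb eta : R) (al be sm t : nat) :
  0 < Cu -> Cu < Vb -> 0 < V -> Vb + V <= Cb -> Vb + sm%:R * V <= Cb ->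
  (L + 1 <= sm)%N -> (sm + 2 <= t <= T)%N -> (1 <= al)%N -> (al < be)%N -> (be <= sm)%N ->
  let A := Apt T Cb in let S := inS al be sm in
  forall j, (1 <= j <= T)%N -> j != t ->
    inP T L ell Cb Cu V Vb (Ajpt T Cb V j) /\ inP T L ell Cb Cu V Vb (rv (Ajpt T Cb V j)) /\
    xc T (Ajpt T Cb V j) t = star_def Cb Vb V eta al be sm t (Ajpt T Cb V j).
Proof.
move=> hCu hCuVb hV hVbC hsmC hLs ht hal hab hbs.
move=> A S.
have hSr : forall s, S s -> (1 <= s <= sm)%N by move=> s; apply: inS_range.
move=> j hj hjt.
have hAj : forall j', inP T L ell Cb Cu V Vb (Ajpt T Cb V j').
  move=> j'; apply: ones_inP; first lra.
  - move=> i hi; case: (i == j'); rewrite /= ?mulr1 ?mulr0; lra.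
  - move=> i hi; case: (i == j'); case: (i.-1 == j'); rewrite /= ?mulr1 ?mulr0; lra.
split => //; rewrite rv_Aj //; split => //.
rewrite /Ajpt xc_mkpt; last by lia.
rewrite tight_interval //; try lia.
have -> : (t == j) = false by apply/negbTE; rewrite eq_sym.
rewrite mulr0 subr0 /ind /inS; ifs; ring.
Qed.

Lemma gSD (R : realType) (T L ell : nat) (Cb Cu V Vb eta : R) (al be sm t : nat) :
  0 < Cu -> Cu < Vb -> 0 < V -> Vb + V <= Cb -> Vb + sm%:R * V <= Cb ->
  (L + 1 <= sm)%N -> (sm + 2 <= t <= T)%N -> (1 <= al)%N -> (al < be)%N -> (be <= sm)%N ->
  let A := Apt T Cb in let S := inS al be sm in
  forall k, (1 <= k <= t.-1)%N -> ~~ S (t - k)%N ->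
    inP T L ell Cb Cu V Vb (CIpt T Cu 1 k) /\ inP T L ell Cb Cu V Vb (rv (CIpt T Cu 1 k)) /\
    xc T (CIpt T Cu 1 k) t = star_def Cb Vb V eta al be sm t (CIpt T Cu 1 k).
Proof.
move=> hCu hCuVb hV hVbC hsmC hLs ht hal hab hbs.
move=> A S.
have hSr : forall s, S s -> (1 <= s <= sm)%N by move=> s; apply: inS_range.
move=> k hk hSk.
split; first by apply: const_inP; [left| lra| lra| lra| lra| lra].
split; first by rewrite rv_CI; [apply: const_inP; [right; right; lia| lra| lra| lra| lra| lra]|lia|lia].
rewrite /CIpt xc_mkpt; last by lia.
rewrite tight_interval //; try lia.
move: hSk; rewrite /S /inS => hSk; rewrite /ind /inS; ifs; ring.
Qed.

Lemma gSU (R : realType) (T L ell : nat) (Cb Cu V Vb eta : R) (al be sm t : nat) :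
  0 < Cu -> Cu < Vb -> 0 < V -> Vb + V <= Cb -> Vb + sm%:R * V <= Cb ->
  (L + 1 <= sm)%N -> (sm + 2 <= t <= T)%N -> (1 <= al)%N -> (al < be)%N -> (be <= sm)%N ->
  let A := Apt T Cb in let S := inS al be sm in
  forall k, (t.+1 <= k <= T.+1)%N ->
    inP T L ell Cb Cu V Vb (CIpt T Cu k T.+1) /\ inP T L ell Cb Cu V Vb (rv (CIpt T Cu k T.+1)) /\
    xc T (CIpt T Cu k T.+1) t = star_def Cb Vb V eta al be sm t (CIpt T Cu k T.+1).
Proof.
move=> hCu hCuVb hV hVbC hsmC hLs ht hal hab hbs.
move=> A S.
have hSr : forall s, S s -> (1 <= s <= sm)%N by move=> s; apply: inS_range.
move=> k hk.
split; first by apply: const_inP; [right; right; lia| lra| lra| lra| lra| lra].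
split; first by rewrite rv_CI; [apply: const_inP; [left; lia| lra| lra| lra| lra| lra]|lia|lia].
rewrite /CIpt xc_mkpt; last by lia.
rewrite tight_interval //; try lia.
rewrite /ind /inS; ifs; ring.
Qed.

Lemma gR (R : realType) (T L ell : nat) (Cb Cu V Vb eta : R) (al be sm t : nat) :
  0 < Cu -> Cu < Vb -> 0 < V -> Vb + V <= Cb -> Vb + sm%:R * V <= Cb ->
  (L + 1 <= sm)%N -> (sm + 2 <= t <= T)%N -> (1 <= al)%N -> (al < be)%N -> (be <= sm)%N ->
  let A := Apt T Cb in let S := inS al be sm in
  forall k, (1 <= k <= t)%N -> (S (t - k)%N \/ (k = t /\ eta = 0)) ->
    inP T L ell Cb Cu V Vb (Rpt T Cb Vb V k) /\ inP T L ell Cb Cu V Vb (rv (Rpt T Cb Vb V k)) /\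
    xc T (Rpt T Cb Vb V k) t = star_def Cb Vb V eta al be sm t (Rpt T Cb Vb V k).
Proof.
move=> hCu hCuVb hV hVbC hsmC hLs ht hal hab hbs.
move=> A S.
have hSr : forall s, S s -> (1 <= s <= sm)%N by move=> s; apply: inS_range.
move=> k hk hSk.
split; first by apply: rampup_inP => //; [lia|lra|lra|lra|lra].
split; first by rewrite rv_R; [apply: rampdn_inP => //; [lia|lra|lra|lra|lra]|lia].
rewrite /Rpt xc_mkpt; last by lia.
rewrite tight_interval //; try lia.
have htk : ((t - k)%N <= sm)%N.
  case: hSk => [/hSr|[-> _]]; lia.
have htkV : (t - k)%:R * V <= sm%:R * V.
  apply: ler_wpM2r; [lra|by rewrite ler_nat].
have h0 : 0 <= (t - k)%:R * V by apply: mulr_ge0; [apply: ler0n|lra].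
ifs.
have -> : Num.min Cb (Vb + (t - k)%:R * V) = Vb + (t - k)%:R * V by mincase; lra.
case: hSk => [hSk|[hkt he]].
- move: hSk; rewrite /S /inS => hSk; rewrite /ind /inS; ifs; ring.
- subst k; rewrite he subnn /ind /inS; ifs; rewrite mul0r; ring.
Qed.

Lemma gG (R : realType) (T L ell : nat) (Cb Cu V Vb eta : R) (al be sm t : nat) :
  0 < Cu -> Cu < Vb -> 0 < V -> Vb + V <= Cb -> Vb + sm%:R * V <= Cb ->
  (L + 1 <= sm)%N -> (sm + 2 <= t <= T)%N -> (1 <= al)%N -> (al < be)%N -> (be <= sm)%N ->
  let A := Apt T Cb in let S := inS al be sm in
  eta = L%:R -> S L ->
    inP T L ell Cb Cu V Vb (CIpt T Cu (t - L) t) /\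
    inP T L ell Cb Cu V Vb (rv (CIpt T Cu (t - L) t)) /\
    xc T (CIpt T Cu (t - L) t) t = star_def Cb Vb V eta al be sm t (CIpt T Cu (t - L) t).
Proof.
move=> hCu hCuVb hV hVbC hsmC hLs ht hal hab hbs.
move=> A S.
have hSr : forall s, S s -> (1 <= s <= sm)%N by move=> s; apply: inS_range.
move=> he hSL.
split; first by apply: const_inP; [right; left; lia| lra| lra| lra| lra| lra].
split; first by rewrite rv_CI; [apply: const_inP; [right; left; lia| lra| lra| lra| lra| lra]|lia|lia].
rewrite /CIpt xc_mkpt; last by lia.
rewrite tight_interval //; try lia.
have -> : (t - (t - L) = L)%N by lia.
move: hSL; rewrite /S /inS => hSL; rewrite he /ind /inS; ifs; ring.
Qed.


Lemma face_family (R : realType) (T L ell : nat) (Cb Cu V Vb eta : R) (al be sm t : nat) :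
  0 < Cu -> Cu < Vb -> 0 < V -> Vb + V <= Cb -> Vb + sm%:R * V <= Cb ->
  (0 < L)%N -> (L + 1 <= sm)%N -> (sm + 2 <= t <= T)%N -> (1 <= al)%N -> (al < be)%N -> (be <= sm)%N ->
  (eta = 0 \/ (eta = L%:R /\ inS al be sm L)) ->
  exists m (p : 'I_m.+1 -> 'rV[R]_(T + T)),
    (forall i, inP T L ell Cb Cu V Vb (p i)) /\
    (forall i, inP T L ell Cb Cu V Vb (rv (p i))) /\
    (forall i, xc T (p i) t = star_def Cb Vb V eta al be sm t (p i)) /\
    (forall j, (1 <= j <= T)%N -> j != t -> (exv R T j <= Defs.diffmx p)%MS) /\
    (forall k, (1 <= k <= T)%N -> exists X : nat -> R, (mkpt T X (ind1 R k) <= Defs.diffmx p)%MS).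
Proof.
move=> hCu hCuVb hV hVbC hsmC hL0 hLs ht hal hab hbs heta.
set S := inS al be sm.
set A := Apt T Cb.
set tl := [seq Ajpt T Cb V j | j <- [seq j <- iota 1 T | j != t]]
  ++ [seq CIpt T Cu 1 k | k <- [seq k <- iota 1 t.-1 | ~~ S (t - k)%N]]
  ++ [seq Rpt T Cb Vb V k | k <- [seq k <- iota 1 t.-1 | S (t - k)%N]]
  ++ [seq CIpt T Cu k T.+1 | k <- iota t.+1 (T - t).+1]
  ++ [:: if eta == 0 then Rpt T Cb Vb V t else CIpt T Cu (t - L) t].
set p := fun i : 'I_(size tl).+1 => nth A (A :: tl) i.
have hSr : forall s, S s -> (1 <= s <= sm)%N by move=> s; apply: inS_range.
have gA := @gA R T L ell Cb Cu V Vb eta al be sm t hCu hCuVb hV hVbC hsmC hLs ht hal hab hbs.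
have gAj := @gAj R T L ell Cb Cu V Vb eta al be sm t hCu hCuVb hV hVbC hsmC hLs ht hal hab hbs.
have gSD := @gSD R T L ell Cb Cu V Vb eta al be sm t hCu hCuVb hV hVbC hsmC hLs ht hal hab hbs.
have gSU := @gSU R T L ell Cb Cu V Vb eta al be sm t hCu hCuVb hV hVbC hsmC hLs ht hal hab hbs.
have gR := @gR R T L ell Cb Cu V Vb eta al be sm t hCu hCuVb hV hVbC hsmC hLs ht hal hab hbs.
have gG := @gG R T L ell Cb Cu V Vb eta al be sm t hCu hCuVb hV hVbC hsmC hLs ht hal hab hbs.
simpl in gA, gAj, gSD, gSU, gR, gG.
exists (size tl), p.
have memgood : forall q, q \in A :: tl ->
    inP T L ell Cb Cu V Vb q /\ inP T L ell Cb Cu V Vb (rv q) /\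
    xc T q t = star_def Cb Vb V eta al be sm t q.
  move=> q; rewrite inE => /orP [/eqP -> | ]; first exact: gA.
  rewrite !mem_cat => /orP [|/orP [|/orP [|/orP [|]]]].
  - case/mapP => j; rewrite mem_filter mem_iota => /andP [hjt hj] ->; apply: gAj => //; lia.
  - case/mapP => k; rewrite mem_filter mem_iota => /andP [hSk hk] ->; apply: gSD => //; lia.
  - case/mapP => k; rewrite mem_filter mem_iota => /andP [hSk hk] ->; apply: gR; [lia| by left].
  - case/mapP => k; rewrite mem_iota => hk ->; apply: gSU; lia.
  - rewrite inE => /eqP ->; case: eqP => he.
    + apply: gR; [lia | right; split => //].
    + case: heta => [//|[he' hSL]]; exact: gG.
have hmem : forall i, p i \in A :: tl by move=> i; rewrite /p mem_nth.
have in1 : forall j, (1 <= j <= T)%N -> j != t -> Ajpt T Cb V j \in A :: tl.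
  move=> j hj hjt; rewrite inE !mem_cat (map_f (Ajpt T Cb V)) ?orbT //.
  rewrite mem_filter hjt mem_iota /=; lia.
have in2 : forall k, (1 <= k <= t.-1)%N -> ~~ S (t - k)%N -> CIpt T Cu 1 k \in A :: tl.
  move=> k hk hSk; rewrite inE !mem_cat (map_f (CIpt T Cu 1)) ?orbT //.
  rewrite mem_filter hSk mem_iota /=; lia.
have in3 : forall k, (1 <= k <= t.-1)%N -> S (t - k)%N -> Rpt T Cb Vb V k \in A :: tl.
  move=> k hk hSk; rewrite inE !mem_cat (map_f (Rpt T Cb Vb V)) ?orbT //.
  rewrite mem_filter hSk mem_iota /=; lia.
have in4 : forall k, (t.+1 <= k <= T.+1)%N -> CIpt T Cu k T.+1 \in A :: tl.
  move=> k hk; rewrite inE !mem_cat (map_f (fun k => CIpt T Cu k T.+1)) ?orbT //.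
  rewrite mem_iota /=; lia.
have in5 : (if eta == 0 then Rpt T Cb Vb V t else CIpt T Cu (t - L) t) \in A :: tl.
  rewrite inE !mem_cat; do 5 (apply/orP; right); exact: mem_head.
split; [|split; [|split; [|split]]].
- by move=> i; case: (memgood _ (hmem i)).
- by move=> i; case: (memgood _ (hmem i)) => _ [].
- by move=> i; case: (memgood _ (hmem i)) => _ [].
- move=> j hj hjt.
  have hd := mem_diff (in1 j hj hjt).
  have -> : exv R T j = (- V^-1) *: (Ajpt T Cb V j - A).
    rewrite /A /Apt /Ajpt mkptB mkptZ /exv; apply: mkpt_ext => i hi.
    + field; lra.
    + ring.
  exact: scalemx_sub.
- pose Gy (Y : nat -> R) := exists X : nat -> R, (mkpt T X Y <= Defs.diffmx p)%MS.
  have Gdiff : forall X1 Y1 X2 Y2, mkpt T X1 Y1 \in A :: tl -> mkpt T X2 Y2 \in A :: tl ->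
      Gy (fun i => Y1 i - Y2 i).
    move=> X1 Y1 X2 Y2 h1 h2; exists (fun i => X1 i - X2 i); rewrite -mkptB.
    have -> : mkpt T X1 Y1 - mkpt T X2 Y2 =
        (mkpt T X1 Y1 - A) + (-1) *: (mkpt T X2 Y2 - A).
      by rewrite scaleN1r opprB addrA subrK.
    apply: addmx_sub; [exact: mem_diff | apply: scalemx_sub; exact: mem_diff].
  have Glin : forall a Y1 Y2, Gy Y1 -> Gy Y2 -> Gy (fun i => a * Y1 i + Y2 i).
    move=> a Y1 Y2 [X1 h1] [X2 h2]; exists (fun i => a * X1 i + X2 i).
    rewrite -(mkptD T (fun i => a * X1 i) (fun i => a * Y1 i)) -mkptZ.
    by apply: addmx_sub => //; apply: scalemx_sub.
  have Gext : forall Y1 Y2, Gy Y1 -> (forall i, (1 <= i <= T)%N -> Y1 i = Y2 i) -> Gy Y2.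
    move=> Y1 Y2 [X1 h1] hE; exists X1; by rewrite -(mkpt_ext (X1:=X1) (X2:=X1) _ hE).
  have G0 : Gy (fun _ => 0).
    exists (fun _ => 0); rewrite /mkpt.
    have -> : \row_(i < T) (0 : R) = 0 by apply/rowP => i; rewrite !mxE.
    by rewrite row_mx0 sub0mx.
  have GA : Gy (ind 1 T.+1).
    have h := Gdiff _ _ _ _ (in4 T.+1 ltac:(lia)) (mem_head A tl).
    apply: Gext (Glin (-1) _ _ h G0) _ => i hi; rewrite /ind; ifs; ring.
  have Gsmall : forall k, (1 <= k <= t.-1)%N -> Gy (ind k T.+1).
    move=> k hk; case hSk : (S (t - k)%N).
    + have h := Gdiff _ _ _ _ (in3 k hk hSk) (mem_head A tl).
      apply: Gext (Glin 1 _ _ h GA) _ => i hi; ring.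
    + have h := Gdiff _ _ _ _ (in2 k hk (negbT hSk)) (mem_head A tl).
      apply: Gext (Glin (-1) _ _ h G0) _ => i hi; rewrite /ind; ifs;
      case: (boolP (k <= i)%N) => a; ifs; first [ring | exfalso; lia].
  have Gk : forall k, (1 <= k <= T.+1)%N -> Gy (ind k T.+1).
    move=> k hk; case: (ltngtP k t) => hkt.
    + apply: Gsmall; lia.
    + have h := Gdiff _ _ _ _ (in4 k ltac:(lia)) (mem_head A tl).
      apply: Gext (Glin 1 _ _ h GA) _ => i hi; ring.
    + subst k; move: in5; case: eqP => he in5.
      * have h := Gdiff _ _ _ _ in5 (mem_head A tl).
        apply: Gext (Glin 1 _ _ h GA) _ => i hi; ring.
      * have h := Gdiff _ _ _ _ in5 (mem_head A tl).
        have hL := Gsmall (t - L)%N ltac:(lia).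
        apply: Gext (Glin (-1) _ _ h (Glin (-1) _ _ GA hL)) _ => i hi; rewrite /ind; ifs;
        case: (boolP (t - L <= i)%N) => a; case: (boolP (t <= i)%N) => b; ifs; first [ring | exfalso; lia].
  move=> k hk.
  have := Glin (-1) _ _ (Gk k.+1 ltac:(lia)) (Gk k ltac:(lia)).
  move=> h; apply: Gext h _ => i hi; rewrite /ind /ind1; ifs;
  case: (eqVneq i k) => [->|hik]; ifs; rewrite ?eqxx //=;
  case: (boolP (k <= i)%N) => a; case: (boolP (k.+1 <= i)%N) => b; ifs; try ring;
  exfalso; lia.
Qed.


Lemma P_conv (R : realType) n (P : 'rV[R]_n -> Prop) z : P z -> conv P z.
Proof.
move=> hz; exists 1%N, (fun _ => z), (fun _ => 1).
split; first by [].
split; first by move=> i; exact: ler01.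
by split; rewrite big_ord1 ?scale1r.
Qed.

Lemma yc_exv (R : realType) T j k : yc T (exv R T j) k = 0.
Proof.
rewrite /yc /ent; case: insubP => [i hi hv|] //=.
have hv' : nat_of_ord i = (T + k.-1)%N by exact: hv.
have hk : ((i : nat) - T < T)%N by have := ltn_ord i; lia.
have -> : i = rshift T (Ordinal hk) by apply: val_inj => /=; lia.
by rewrite /exv /mkpt row_mxEr mxE.
Qed.

Lemma rv_exv (R : realType) T j : (1 <= j <= T)%N -> rv (exv R T j) = exv R T (T.+1 - j).
Proof.
move=> hj; rewrite /exv rv_mkpt; apply: mkpt_ext => i hi //.
case: (eqVneq i (T.+1 - j)%N) => [->|h].
- have -> : (T.+1 - (T.+1 - j) == j)%N by apply/eqP; lia.
  done.
- have -> : (T.+1 - i == j)%N = false by apply/negbTE/negP => /eqP; lia.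
  done.
Qed.

Lemma rv_ind1 (R : realType) T (X : nat -> R) k : (1 <= k <= T)%N ->
  rv (mkpt T X (ind1 R k)) = mkpt T (fun i => X (T.+1 - i)%N) (ind1 R (T.+1 - k)).
Proof.
move=> hk; rewrite rv_mkpt; apply: mkpt_ext => i hi //; rewrite /ind1.
case: (eqVneq i (T.+1 - k)%N) => [->|h].
- have -> : (T.+1 - (T.+1 - k) == k)%N by apply/eqP; lia.
  done.
- have -> : (T.+1 - i == k)%N = false by apply/negbTE/negP => /eqP; lia.
  done.
Qed.

Lemma face_ub_gen (R : realType) n m (p : 'I_m.+1 -> 'rV[R]_n) (f : 'rV[R]_n -> R) c :
  (forall a u v, f (a *: u + v) = a * f u + f v) ->
  f (delta_mx 0 c) != 0 -> (forall i, f (p i) = 0) -> (\rank (Defs.diffmx p) <= n - 1)%N.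
Proof.
move=> hf hc hp; apply: (rank_face_ub hf hc) => i.
rewrite /Defs.diffmx rowK.
have -> : p (lift ord0 i) - p ord0 = (-1) *: p ord0 + p (lift ord0 i) by rewrite scaleN1r addrC.
by rewrite hf !hp mulr0 addr0.
Qed.

Lemma P_family (R : realType) (T L ell : nat) (Cb Cu V Vb : R) :
  0 < Cu -> Cu < Vb -> 0 < V -> Vb + V <= Cb ->
  exists m (p : 'I_m.+1 -> 'rV[R]_(T + T)),
    (forall i, inP T L ell Cb Cu V Vb (p i)) /\ \rank (Defs.diffmx p) = (T + T)%N.
Proof.
move=> hCu hCuVb hV hVbC.
set A := Apt T Cb.
set tl := [seq Ajpt T Cb V j | j <- iota 1 T] ++ [seq CIpt T Cu k T.+1 | k <- iota 1 T.+1].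
set p := fun i : 'I_(size tl).+1 => nth A (A :: tl) i.
exists (size tl), p.
have hAj : forall j', inP T L ell Cb Cu V Vb (Ajpt T Cb V j').
  move=> j'; apply: ones_inP; first lra.
  - move=> i hi; case: (i == j'); rewrite /= ?mulr1 ?mulr0; lra.
  - move=> i hi; case: (i == j'); case: (i.-1 == j'); rewrite /= ?mulr1 ?mulr0; lra.
have hA : inP T L ell Cb Cu V Vb A.
  apply: ones_inP; [lra| move=> j hj; lra | move=> j hj; split; lra].
have hSU : forall k, inP T L ell Cb Cu V Vb (CIpt T Cu k T.+1).
  move=> k; apply: const_inP; [right; right; lia| lra| lra| lra| lra| lra].
have memgood : forall q, q \in A :: tl -> inP T L ell Cb Cu V Vb q.
  move=> q; rewrite inE => /orP [/eqP -> // | ].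
  rewrite !mem_cat => /orP [].
  - by case/mapP => j _ ->.
  - by case/mapP => k _ ->.
have in1 : forall j, (1 <= j <= T)%N -> Ajpt T Cb V j \in A :: tl.
  move=> j hj; rewrite inE !mem_cat (map_f (Ajpt T Cb V)) ?orbT //.
  rewrite mem_iota /=; lia.
have in4 : forall k, (1 <= k <= T.+1)%N -> CIpt T Cu k T.+1 \in A :: tl.
  move=> k hk; rewrite inE !mem_cat (map_f (fun k => CIpt T Cu k T.+1)) ?orbT //.
  rewrite mem_iota /=; lia.
split.
- by move=> i; apply: memgood; rewrite /p mem_nth.
apply: rank_full.
- move=> j hj.
  have hd := mem_diff (in1 j hj).
  have -> : exv R T j = (- V^-1) *: (Ajpt T Cb V j - A).
    rewrite /A /Apt /Ajpt mkptB mkptZ /exv; apply: mkpt_ext => i hi.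
    + field; lra.
    + ring.
  exact: scalemx_sub.
- pose Gy (Y : nat -> R) := exists X : nat -> R, (mkpt T X Y <= Defs.diffmx p)%MS.
  have Gdiff : forall X1 Y1 X2 Y2, mkpt T X1 Y1 \in A :: tl -> mkpt T X2 Y2 \in A :: tl ->
      Gy (fun i => Y1 i - Y2 i).
    move=> X1 Y1 X2 Y2 h1 h2; exists (fun i => X1 i - X2 i); rewrite -mkptB.
    have -> : mkpt T X1 Y1 - mkpt T X2 Y2 =
        (mkpt T X1 Y1 - A) + (-1) *: (mkpt T X2 Y2 - A).
      by rewrite scaleN1r opprB addrA subrK.
    apply: addmx_sub; [exact: mem_diff | apply: scalemx_sub; exact: mem_diff].
  have Glin : forall a Y1 Y2, Gy Y1 -> Gy Y2 -> Gy (fun i => a * Y1 i + Y2 i).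
    move=> a Y1 Y2 [X1 h1] [X2 h2]; exists (fun i => a * X1 i + X2 i).
    rewrite -(mkptD T (fun i => a * X1 i) (fun i => a * Y1 i)) -mkptZ.
    by apply: addmx_sub => //; apply: scalemx_sub.
  have Gext : forall Y1 Y2, Gy Y1 -> (forall i, (1 <= i <= T)%N -> Y1 i = Y2 i) -> Gy Y2.
    move=> Y1 Y2 [X1 h1] hE; exists X1; by rewrite -(mkpt_ext (X1:=X1) (X2:=X1) _ hE).
  have G0 : Gy (fun _ => 0).
    exists (fun _ => 0); rewrite /mkpt.
    have -> : \row_(i < T) (0 : R) = 0 by apply/rowP => i; rewrite !mxE.
    by rewrite row_mx0 sub0mx.
  have GA : Gy (ind 1 T.+1).
    have h := Gdiff _ _ _ _ (in4 T.+1 ltac:(lia)) (mem_head A tl).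
    apply: Gext (Glin (-1) _ _ h G0) _ => i hi; rewrite /ind; ifs; ring.
  have Gk : forall k, (1 <= k <= T.+1)%N -> Gy (ind k T.+1).
    move=> k hk; have h := Gdiff _ _ _ _ (in4 k hk) (mem_head A tl).
    apply: Gext (Glin 1 _ _ h GA) _ => i hi; ring.
  move=> k hk.
  have := Glin (-1) _ _ (Gk k.+1 ltac:(lia)) (Gk k ltac:(lia)).
  move=> h; apply: Gext h _ => i hi; rewrite /ind /ind1; ifs;
  case: (eqVneq i k) => [->|hik]; ifs; rewrite ?eqxx //=;
  case: (boolP (k <= i)%N) => a; case: (boolP (k.+1 <= i)%N) => b; ifs; try ring;
  exfalso; lia.
Qed.

Ltac nlia R := repeat match goal with H : context [R] |- _ => clear H end; lia.

Theorem proposition6 (R : realType) (T L ell : nat) (Cbar Cund V Vbar eta : R)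
  (alpha beta smax : nat) :
  (0 < T)%N -> (0 < L)%N -> (0 < ell)%N ->
  Cund < Cbar -> 0 < Cund -> 0 < V -> Vbar + V <= Cbar ->
  Cund < Vbar -> Vbar < Cund + V ->
  0 <= eta -> eta <= Num.min (L%:R) ((Cbar - Vbar) / V) ->
  (L + 1 <= smax)%N -> (smax%:Z <= T%:Z - 2) ->
  (smax%:Z <= Num.floor ((Cbar - Vbar) / V)) ->
  (1 <= alpha)%N -> (alpha < beta)%N -> (beta <= smax)%N ->
  (beta = alpha + 1 \/ (smax <= L + alpha)%N)%N ->
  let A := conv (inP T L ell Cbar Cund V Vbar) in
  let star t := fun z : 'rV[R]_(T + T) =>
    (Vbar + eta * V) * yc T z t + (Cbar - Vbar - eta * V) * yc T z (t - 1)
    - \sum_(0 <= s < smax.+1 | inS alpha beta smax s)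
        (Cbar - Vbar - s%:R * V) * (yc T z (t - s) - yc T z (t - s - 1)) in
  let star2 t := fun z : 'rV[R]_(T + T) =>
    (Vbar + eta * V) * yc T z t + (Cbar - Vbar - eta * V) * yc T z (t + 1)
    - \sum_(0 <= s < smax.+1 | inS alpha beta smax s)
        (Cbar - Vbar - s%:R * V) * (yc T z (t + s) - yc T z (t + s + 1)) in
  (forall t, (smax + 2 <= t <= T)%N -> valid_for A (fun z => xc T z t) (star t)) /\
  (forall t, (1 <= t)%N -> (t%:Z <= T%:Z - smax%:Z - 1) ->
     valid_for A (fun z => xc T z t) (star2 t)) /\
  ((eta = 0 \/ eta = (Cbar - Vbar) / V \/ (eta = L%:R /\ inS alpha beta smax L)) ->
     (forall t, (smax + 2 <= t <= T)%N -> facet_for A (fun z => xc T z t) (star t)) /\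
     (forall t, (1 <= t)%N -> (t%:Z <= T%:Z - smax%:Z - 1) ->
        facet_for A (fun z => xc T z t) (star2 t))).
Proof.
move=> hT hL hell hCC hCu hV hVbC hCuVb hVbCu he0 heL hsm1 hsmT hsmfl hal hab hbs hc A star star2.
have [eL eC] : eta <= L%:R /\ eta <= (Cbar - Vbar) / V.
  by move: heL; rewrite le_min => /andP.
have hsmR : smax%:R <= (Cbar - Vbar) / V.
  by move: hsmfl; rewrite floor_ge_int.
have hC : Vbar + smax%:R * V <= Cbar.
  by move: hsmR; rewrite ler_pdivlMr //; lra.
have hTs : (smax + 2 <= T)%N by nlia R.
have hLs : (L <= smax)%N by nlia R.
have hval := fun z hz => @valid_P R T L ell Cbar Cund V Vbar eta alpha beta smax z
   hal hab hbs hc hLs hV hC he0 eL hz.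
have V1 : forall t, (smax + 2 <= t <= T)%N -> valid_for A (fun z => xc T z t) (star t).
  move=> t ht; apply: conv_valid.
  - move=> a u v; exact: xc_lin.
  - move=> a u v; exact: star_lin.
  - move=> z hz; exact: (hval z hz).1 t ht.
have V2 : forall t, (1 <= t)%N -> (t%:Z <= T%:Z - smax%:Z - 1) ->
    valid_for A (fun z => xc T z t) (star2 t).
  move=> t ht1 ht2; apply: conv_valid.
  - move=> a u v; exact: xc_lin.
  - move=> a u v; exact: star2_lin.
  - move=> z hz; apply: (hval z hz).2; nlia R.
split; [exact: V1|split; [exact: V2|]].
move=> hfac.
have heta : eta = 0 \/ (eta = L%:R /\ inS alpha beta smax L).
  case: hfac => [->|[he|[he hS]]]; [by left| |by right].
  exfalso.
  have : (L + 1)%:R <= smax%:R :> R by rewrite ler_nat.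
  rewrite natrD; lra.
have dimA : has_affdim A (T + T)%:Z.
  right; exists (T + T)%N; split => //; split.
  - have [m [p [hp hr]]] := @P_family R T L ell Cbar Cund V Vbar hCu hCuVb hV hVbC.
    exists m, p; split => //; move=> i; apply: P_conv; exact: hp.
  - move=> m p _; exact: rank_leq_col.
have hT1 : (1 <= T)%N by nlia R.
have exv_delta : forall t, (1 <= t <= T)%N -> exists c : 'I_(T + T),
    delta_mx 0 c = exv R T t.
  move=> t ht; have ht' : (t.-1 < T)%N by nlia R.
  exists (lshift T (Ordinal ht')); rewrite delta_l /=; congr exv; nlia R.
have xc_exv : forall t, (1 <= t <= T)%N -> xc T (exv R T t) t = 1.
  by move=> t ht; rewrite /exv xc_mkpt // eqxx.
have hdimm : (T + T)%:Z - 1 = (T + T - 1)%N%:Z by nlia R.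
split.
- move=> t ht; split; first exact: V1.
  exists (T + T)%:Z; split => //.
  right; exists (T + T - 1)%N; split => //.
  pose f := fun z => xc T z t - star t z.
  have fl : forall a u v, f (a *: u + v) = a * f u + f v.
    move=> a u v; rewrite /f xc_lin.
    have -> : star t (a *: u + v) = a * star t u + star t v by exact: star_lin.
    ring.
  have [c hcd] := exv_delta t ltac:(nlia R).
  have fd : f (delta_mx 0 c) != 0.
    rewrite hcd /f xc_exv; last by nlia R.
    have -> : star t (exv R T t) = 0.
      rewrite /star !yc_exv.
      under eq_bigr do rewrite !yc_exv subrr mulr0.
      rewrite big1_eq; ring.
    by rewrite subr0 oner_neq0.
  split.
  + have [m [p [hp [_ [htp [hx hy]]]]]] :=
      @face_family R T L ell Cbar Cund V Vbar eta alpha beta smax t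
        hCu hCuVb hV hVbC hC hL hsm1 ht hal hab hbs heta.
    exists m, p; split.
    * move=> i; split; [apply: P_conv; exact: hp| exact: htp].
    * apply/eqP; rewrite eqn_leq; apply/andP; split.
      -- apply: (face_ub_gen fl fd) => i; rewrite /f htp subrr //.
      -- apply: (rank_face_lb (t0 := t)); [nlia R| exact: hx | exact: hy].
  + move=> m p hp; apply: (face_ub_gen fl fd) => i; have [_ e] := hp i.
    by rewrite /f e subrr.
- move=> t ht1 ht2; split; first exact: V2.
  exists (T + T)%:Z; split => //.
  right; exists (T + T - 1)%N; split => //.
  have ht3 : (t + smax + 1 <= T)%N by nlia R.
  pose f := fun z => xc T z t - star2 t z.
  have fl : forall a u v, f (a *: u + v) = a * f u + f v.
    move=> a u v; rewrite /f xc_lin.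
    have -> : star2 t (a *: u + v) = a * star2 t u + star2 t v by exact: star2_lin.
    ring.
  have [c hcd] := exv_delta t ltac:(nlia R).
  have fd : f (delta_mx 0 c) != 0.
    rewrite hcd /f xc_exv; last by nlia R.
    have -> : star2 t (exv R T t) = 0.
      rewrite /star2 !yc_exv.
      under eq_bigr do rewrite !yc_exv subrr mulr0.
      rewrite big1_eq; ring.
    by rewrite subr0 oner_neq0.
  split.
  + set t' := (T.+1 - t)%N.
    have ht' : (smax + 2 <= t' <= T)%N by rewrite /t'; nlia R.
    have [m [p [hp [hpr [htp [hx hy]]]]]] :=
      @face_family R T L ell Cbar Cund V Vbar eta alpha beta smax t'
        hCu hCuVb hV hVbC hC hL hsm1 ht' hal hab hbs heta.
    have htp' : forall i, xc T (rv (p i)) t = star2 t (rv (p i)).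
      move=> i; rewrite rv_rv_x; last by nlia R.
      have -> : star2 t (rv (p i)) = star_def Cbar Vbar V eta alpha beta smax t' (p i).
        exact: star2_rv.
      exact: htp.
    exists m, (fun i => rv (p i)); split.
    * move=> i; split; [apply: P_conv; exact: hpr| exact: htp'].
    * apply/eqP; rewrite eqn_leq; apply/andP; split.
      -- apply: (face_ub_gen fl fd) => i; rewrite /f htp' subrr //.
      -- apply: (rank_face_lb (t0 := t)); first nlia R.
         ++ move=> j hj hjt.
            have hj' : (1 <= T.+1 - j <= T)%N by nlia R.
            have -> : exv R T j = rv (exv R T (T.+1 - j)).
              rewrite rv_exv //; congr exv; nlia R.
            apply: rv_sub; apply: hx => //.
            apply/negP => /eqP; rewrite /t'; nlia R.
         ++ move=> k hk.
            have hk' : (1 <= T.+1 - k <= T)%N by nlia R.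
            have [X hX] := hy (T.+1 - k)%N hk'.
            exists (fun i => X (T.+1 - i)%N).
            have := rv_sub hX; rewrite rv_ind1 //.
            have -> : (T.+1 - (T.+1 - k) = k)%N by nlia R.
            done.
  + move=> m p hp; apply: (face_ub_gen fl fd) => i; have [_ e] := hp i.
    by rewrite /f e subrr.
Qed.
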